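(* Let $\xi_{\{\mu\}},\xi_{\{\sigma\}}$ be global conformal Killing vector fields on $\mathbb{E}^2$ with parameters $\mu=(\mu_0,\mu_1,\mu_2)$ and $\sigma=(\sigma_0,\sigma_1,\sigma_2)$, and assume $\xi_{\{\mu\}}$ is not the zero vector field. Then: 1. $\xi_{\{\sigma\}}$ is everywhere orthogonal (with respect to $g_E$) to $\xi_{\{\mu\}}$ if and only if $\sigma=i\,r\,\mu$ for some $r\in\mathbb{R}$. 2. $\xi_{\{\sigma\}}$ commutes with $\xi_{\{\mu\}}$ if and only if $\sigma=c\,\mu$ for some $c\in\mathbb{C}$. Moreover, for every $c\in\mathbb{C}$ and every $p\in\mathbb{E}^2$, $g_E(\xi_{\{c\mu\}},\xi_{\{c\mu\}})|_p=|c|^2\,g_E(\xi_{\{\mu\}},\xi_{\{\mu\}})|_p$.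
   Context: $\mathbb{E}^2$ is the Euclidean plane with Cartesian coordinates $\{x,y\}$ and metric $g_E=dx^2+dy^2$; set $z=\frac12(x-iy)$, so $g_E=4\,dz\,d\bar z$. For $\mu=(\mu_0,\mu_1,\mu_2)\in\mathbb{C}^3$ the global conformal Killing vector (GCKV) with parameters $\mu$ is $\xi_{\{\mu\}}=(\mu_0+\mu_1z+\frac12\mu_2z^2)\partial_z+(\bar\mu_0+\bar\mu_1\bar z+\frac12\bar\mu_2\bar z^2)\partial_{\bar z}$; these are exactly the conformal Killing vectors of $g_E$ that extend smoothly to the Riemann sphere. *)

(* Defs.v *)
From Stdlib Require Import Reals.
From Coquelicot Require Import Coquelicot.

Open Scope R_scope.

Definition cparam : Type := (C * C * C)%type.
Definition par0 (m : cparam) : C := fst (fst m).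
Definition par1 (m : cparam) : C := snd (fst m).
Definition par2 (m : cparam) : C := snd m.
Definition mkpar (a b c : C) : cparam := (a, b, c).

Definition cscale (c : C) (m : cparam) : cparam :=
  mkpar (Cmult c (par0 m)) (Cmult c (par1 m)) (Cmult c (par2 m)).

(* A vector field on E^2, given by its Cartesian components (X^x, X^y)
   (i.e. X = X^x d_x + X^y d_y) at the point (x, y). *)
Definition vfield : Type := R -> R -> R * R.

Definition zcoord (x y : R) : C := (x / 2, - y / 2).

Definition gckv_coef (m : cparam) (z : C) : C :=
  Cplus (Cplus (par0 m) (Cmult (par1 m) z))
        (Cmult (Cmult (RtoC (/2)) (par2 m)) (Cmult z z)).

(* With x = z + zbar, y = i (z - zbar) we have
   d_z = d_x + i d_y and d_zbar = d_x - i d_y, so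
   xi = f d_z + conj f d_zbar
      = (f + conj f) d_x + (i f - i conj f) d_y  (both coefficients real). *)
Definition gckv (m : cparam) : vfield :=
  fun x y =>
    let f := gckv_coef m (zcoord x y) in
    (Re (Cplus f (Cconj f)),
     Re (Cminus (Cmult Ci f) (Cmult Ci (Cconj f)))).

Definition gE (v w : R * R) : R := fst v * fst w + snd v * snd w.

Definition dx (F : vfield) (x y : R) : R * R :=
  (Derive (fun t => fst (F t y)) x, Derive (fun t => snd (F t y)) x).
Definition dy (F : vfield) (x y : R) : R * R :=
  (Derive (fun t => fst (F x t)) y, Derive (fun t => snd (F x t)) y).

Definition lie (X Y : vfield) : vfield :=
  fun x y =>
    (fst (X x y) * fst (dx Y x y) + snd (X x y) * fst (dy Y x y)
     - (fst (Y x y) * fst (dx X x y) + snd (Y x y) * fst (dy X x y)),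
     fst (X x y) * snd (dx Y x y) + snd (X x y) * snd (dy Y x y)
     - (fst (Y x y) * snd (dx X x y) + snd (Y x y) * snd (dy X x y))).

Definition is_zero_field (X : vfield) : Prop := forall x y, X x y = (0, 0).
Definition everywhere_orthogonal (X Y : vfield) : Prop :=
  forall x y, gE (X x y) (Y x y) = 0.
Definition commute_fields (X Y : vfield) : Prop := is_zero_field (lie X Y).

(* Main.v *)
Require Import Defs.
From Stdlib Require Import Reals Lra.
From Coquelicot Require Import Coquelicot.
Open Scope R_scope.

Definition RF (m : cparam) (x y : R) : R :=
  fst (par0 m) + (fst (par1 m) * (x/2) - snd (par1 m) * (-y/2))
  + /2 * (fst (par2 m) * ((x/2)*(x/2) - (-y/2)*(-y/2)) - snd (par2 m) * (2*(x/2)*(-y/2))).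
Definition IF (m : cparam) (x y : R) : R :=
  snd (par0 m) + (fst (par1 m) * (-y/2) + snd (par1 m) * (x/2))
  + /2 * (fst (par2 m) * (2*(x/2)*(-y/2)) + snd (par2 m) * ((x/2)*(x/2) - (-y/2)*(-y/2))).
Definition DR (m : cparam) (x y : R) : R :=
  fst (par1 m) + fst (par2 m) * (x/2) - snd (par2 m) * (-y/2).
Definition DI (m : cparam) (x y : R) : R :=
  snd (par1 m) + fst (par2 m) * (-y/2) + snd (par2 m) * (x/2).

Lemma pair_eq {A B : Type} (a c : A) (b d : B) : a = c -> b = d -> (a, b) = (c, d).
Proof. intros; subst; reflexivity. Qed.

Lemma gckv_eq m x y : gckv m x y = (2 * RF m x y, -2 * IF m x y).
Proof.
  destruct m as [[[a0r a0i] [a1r a1i]] [a2r a2i]].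
  unfold gckv, gckv_coef, zcoord, RF, IF, par0, par1, par2, Cminus, Cmult, Cplus, Copp, Cconj, Re, RtoC, Ci; simpl.
  apply pair_eq; field.
Qed.

Lemma dx1 m x y : Derive (fun t => fst (gckv m t y)) x = DR m x y.
Proof.
  rewrite (Derive_ext _ (fun t => 2 * RF m t y)) by (intro; rewrite gckv_eq; reflexivity).
  apply is_derive_unique. unfold RF, DR. auto_derive; [trivial | field].
Qed.
Lemma dx2 m x y : Derive (fun t => snd (gckv m t y)) x = - DI m x y.
Proof.
  rewrite (Derive_ext _ (fun t => -2 * IF m t y)) by (intro; rewrite gckv_eq; reflexivity).
  apply is_derive_unique. unfold IF, DI. auto_derive; [trivial | field].
Qed.
Lemma dy1 m x y : Derive (fun t => fst (gckv m x t)) y = DI m x y.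
Proof.
  rewrite (Derive_ext _ (fun t => 2 * RF m x t)) by (intro; rewrite gckv_eq; reflexivity).
  apply is_derive_unique. unfold RF, DI. auto_derive; [trivial | field].
Qed.
Lemma dy2 m x y : Derive (fun t => snd (gckv m x t)) y = DR m x y.
Proof.
  rewrite (Derive_ext _ (fun t => -2 * IF m x t)) by (intro; rewrite gckv_eq; reflexivity).
  apply is_derive_unique. unfold IF, DR. auto_derive; [trivial | field].
Qed.

(* W = f_X f_Y' - f_Y f_X' *)
Definition WR X Y x y := (RF X x y * DR Y x y - IF X x y * DI Y x y) - (RF Y x y * DR X x y - IF Y x y * DI X x y).
Definition WI X Y x y := (RF X x y * DI Y x y + IF X x y * DR Y x y) - (RF Y x y * DI X x y + IF Y x y * DR X x y).

Lemma lie_eq X Y x y : lie (gckv X) (gckv Y) x y = (2 * WR X Y x y, -2 * WI X Y x y).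
Proof.
  unfold lie, dx, dy. rewrite !dx1, !dx2, !dy1, !dy2, !gckv_eq. simpl.
  unfold WR, WI, RF, IF, DR, DI. apply pair_eq; field.
Qed.
Lemma ortho_final (ajr aji akr aki bjr bji bkr bki : R) :
  bkr*bkr + bki*bki <> 0 ->
  ajr*bkr + aji*bki + akr*bjr + aki*bji = 0 ->
  aji*bkr - ajr*bki + akr*bji - aki*bjr = 0 ->
  akr*bkr + aki*bki = 0 ->
  let w := (aki*bkr - akr*bki) / (bkr*bkr + bki*bki) in
  ajr = - w * bji /\ aji = w * bjr.
Proof.
  intros Hn Er Ei P w. unfold w. split.
  - apply (Rmult_eq_reg_r (bkr*bkr + bki*bki)); [|exact Hn].
    field_simplify; [|exact Hn].
    assert (ajr*(bkr*bkr + bki*bki) + (aki*bkr - akr*bki)*bji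
      = (ajr*bkr + aji*bki + akr*bjr + aki*bji)*bkr - (aji*bkr - ajr*bki + akr*bji - aki*bjr)*bki
        - (akr*bkr + aki*bki)*bjr) by ring.
    rewrite Er, Ei, P in H. nra.
  - apply (Rmult_eq_reg_r (bkr*bkr + bki*bki)); [|exact Hn].
    field_simplify; [|exact Hn].
    assert (aji*(bkr*bkr + bki*bki) - (aki*bkr - akr*bki)*bjr
      = (ajr*bkr + aji*bki + akr*bjr + aki*bji)*bki + (aji*bkr - ajr*bki + akr*bji - aki*bjr)*bkr
        - (akr*bkr + aki*bki)*bji) by ring.
    rewrite Er, Ei, P in H. nra.
Qed.

Lemma comm_final (ajr aji akr aki bjr bji bkr bki : R) :
  bkr*bkr + bki*bki <> 0 ->
  ajr*bkr - aji*bki - (akr*bjr - aki*bji) = 0 ->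
  ajr*bki + aji*bkr - (akr*bji + aki*bjr) = 0 ->
  let cr := (akr*bkr + aki*bki) / (bkr*bkr + bki*bki) in
  let ci := (aki*bkr - akr*bki) / (bkr*bkr + bki*bki) in
  ajr = cr * bjr - ci * bji /\ aji = cr * bji + ci * bjr.
Proof.
  intros Hn Dr Di cr ci. unfold cr, ci. split.
  - apply (Rmult_eq_reg_r (bkr*bkr + bki*bki)); [|exact Hn].
    field_simplify; [|exact Hn].
    assert (ajr*(bkr*bkr + bki*bki) - ((akr*bkr + aki*bki)*bjr - (aki*bkr - akr*bki)*bji)
      = (ajr*bkr - aji*bki - (akr*bjr - aki*bji))*bkr + (ajr*bki + aji*bkr - (akr*bji + aki*bjr))*bki) by ring.
    rewrite Dr, Di in H. nra.
  - apply (Rmult_eq_reg_r (bkr*bkr + bki*bki)); [|exact Hn].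
    field_simplify; [|exact Hn].
    assert (aji*(bkr*bkr + bki*bki) - ((akr*bkr + aki*bki)*bji + (aki*bkr - akr*bki)*bjr)
      = -(ajr*bkr - aji*bki - (akr*bjr - aki*bji))*bki + (ajr*bki + aji*bkr - (akr*bji + aki*bjr))*bkr) by ring.
    rewrite Dr, Di in H. nra.
Qed.
Ltac pt H x y := let h := fresh "h" in
  pose proof (H x y) as h; rewrite !gckv_eq in h; unfold gE, RF, IF, par0, par1, par2 in h; simpl in h.

Theorem lemma5p1 (mu sigma : cparam) :
  ~ is_zero_field (gckv mu) ->
  (everywhere_orthogonal (gckv sigma) (gckv mu) <->
     exists r : R, sigma = cscale (Cmult Ci (RtoC r)) mu) /\
  (commute_fields (gckv sigma) (gckv mu) <->
     exists c : C, sigma = cscale c mu) /\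
  (forall (c : C) (x y : R),
     gE (gckv (cscale c mu) x y) (gckv (cscale c mu) x y)
     = (Cmod c ^ 2 * gE (gckv mu x y) (gckv mu x y))%R).
Proof.
  intros Hnz.
  destruct mu as [[[b0r b0i] [b1r b1i]] [b2r b2i]].
  destruct sigma as [[[a0r a0i] [a1r a1i]] [a2r a2i]].
  assert (Hb : ~ (b0r*b0r+b0i*b0i = 0 /\ b1r*b1r+b1i*b1i = 0 /\ b2r*b2r+b2i*b2i = 0)).
  { intros [h0 [h1 h2]]. apply Hnz. intros x y.
    assert (b0r = 0) by nra. assert (b0i = 0) by nra. assert (b1r = 0) by nra.
    assert (b1i = 0) by nra. assert (b2r = 0) by nra. assert (b2i = 0) by nra. subst.
    rewrite gckv_eq. unfold RF, IF, par0, par1, par2; simpl. apply pair_eq; field. }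
  split; [|split].
  - split.
    + intros H.
      pt H 0 0. pt H 2 0. pt H (-2) 0. pt H 4 0. pt H (-4) 0.
      pt H 0 (-2). pt H 0 2. pt H 0 (-4). pt H 2 (-2).
      assert (R00 : a0r*b0r + a0i*b0i = 0) by lra.
      assert (R11 : a1r*b1r + a1i*b1i = 0) by lra.
      assert (R22 : a2r*b2r + a2i*b2i = 0) by lra.
      destruct (Req_dec (b0r*b0r+b0i*b0i) 0) as [Z0|N0]; [destruct (Req_dec (b1r*b1r+b1i*b1i) 0) as [Z1|N1]; [destruct (Req_dec (b2r*b2r+b2i*b2i) 0) as [Z2|N2]; [exfalso; tauto|]|]|].
      {
      exists ((a2i*b2r - a2r*b2i)/(b2r*b2r+b2i*b2i)).
      pose proof (ortho_final a0r a0i a2r a2i b0r b0i b2r b2i N2 ltac:(lra) ltac:(lra) ltac:(lra)) as E0; cbv zeta in E0; destruct E0 as [E0 F0].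
      pose proof (ortho_final a1r a1i a2r a2i b1r b1i b2r b2i N2 ltac:(lra) ltac:(lra) ltac:(lra)) as E1; cbv zeta in E1; destruct E1 as [E1 F1].
      pose proof (ortho_final a2r a2i a2r a2i b2r b2i b2r b2i N2 ltac:(lra) ltac:(lra) ltac:(lra)) as E2; cbv zeta in E2; destruct E2 as [E2 F2].
      unfold cscale, mkpar, par0, par1, par2, Cmult, Ci, RtoC; simpl.
      repeat apply pair_eq; lra.
      }
      {
      exists ((a1i*b1r - a1r*b1i)/(b1r*b1r+b1i*b1i)).
      pose proof (ortho_final a0r a0i a1r a1i b0r b0i b1r b1i N1 ltac:(lra) ltac:(lra) ltac:(lra)) as E0; cbv zeta in E0; destruct E0 as [E0 F0].
      pose proof (ortho_final a1r a1i a1r a1i b1r b1i b1r b1i N1 ltac:(lra) ltac:(lra) ltac:(lra)) as E1; cbv zeta in E1; destruct E1 as [E1 F1].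
      pose proof (ortho_final a2r a2i a1r a1i b2r b2i b1r b1i N1 ltac:(lra) ltac:(lra) ltac:(lra)) as E2; cbv zeta in E2; destruct E2 as [E2 F2].
      unfold cscale, mkpar, par0, par1, par2, Cmult, Ci, RtoC; simpl.
      repeat apply pair_eq; lra.
      }
      {
      exists ((a0i*b0r - a0r*b0i)/(b0r*b0r+b0i*b0i)).
      pose proof (ortho_final a0r a0i a0r a0i b0r b0i b0r b0i N0 ltac:(lra) ltac:(lra) ltac:(lra)) as E0; cbv zeta in E0; destruct E0 as [E0 F0].
      pose proof (ortho_final a1r a1i a0r a0i b1r b1i b0r b0i N0 ltac:(lra) ltac:(lra) ltac:(lra)) as E1; cbv zeta in E1; destruct E1 as [E1 F1].
      pose proof (ortho_final a2r a2i a0r a0i b2r b2i b0r b0i N0 ltac:(lra) ltac:(lra) ltac:(lra)) as E2; cbv zeta in E2; destruct E2 as [E2 F2].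
      unfold cscale, mkpar, par0, par1, par2, Cmult, Ci, RtoC; simpl.
      repeat apply pair_eq; lra.
      }
    + intros [r ->] x y. rewrite !gckv_eq.
      unfold gE, cscale, mkpar, RF, IF, par0, par1, par2, Cmult, Ci, RtoC; simpl. ring.
  - split.
    + intros H.
      pose proof (H 0 0) as q0; rewrite lie_eq in q0; injection q0; intros g0 k0; unfold WR, WI, RF, IF, DR, DI, par0, par1, par2 in g0, k0; simpl in g0, k0.
      pose proof (H 2 0) as q1; rewrite lie_eq in q1; injection q1; intros g1 k1; unfold WR, WI, RF, IF, DR, DI, par0, par1, par2 in g1, k1; simpl in g1, k1.
      pose proof (H (-2) 0) as q2; rewrite lie_eq in q2; injection q2; intros g2 k2; unfold WR, WI, RF, IF, DR, DI, par0, par1, par2 in g2, k2; simpl in g2, k2.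
      destruct (Req_dec (b0r*b0r+b0i*b0i) 0) as [Z0|N0]; [destruct (Req_dec (b1r*b1r+b1i*b1i) 0) as [Z1|N1]; [destruct (Req_dec (b2r*b2r+b2i*b2i) 0) as [Z2|N2]; [exfalso; tauto|]|]|].
      {
      exists ((a2r*b2r + a2i*b2i)/(b2r*b2r+b2i*b2i), (a2i*b2r - a2r*b2i)/(b2r*b2r+b2i*b2i)).
      pose proof (comm_final a0r a0i a2r a2i b0r b0i b2r b2i N2 ltac:(lra) ltac:(lra)) as E0; cbv zeta in E0; destruct E0 as [E0 F0].
      pose proof (comm_final a1r a1i a2r a2i b1r b1i b2r b2i N2 ltac:(lra) ltac:(lra)) as E1; cbv zeta in E1; destruct E1 as [E1 F1].
      pose proof (comm_final a2r a2i a2r a2i b2r b2i b2r b2i N2 ltac:(lra) ltac:(lra)) as E2; cbv zeta in E2; destruct E2 as [E2 F2].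
      unfold cscale, mkpar, par0, par1, par2, Cmult; simpl.
      repeat apply pair_eq; lra.
      }
      {
      exists ((a1r*b1r + a1i*b1i)/(b1r*b1r+b1i*b1i), (a1i*b1r - a1r*b1i)/(b1r*b1r+b1i*b1i)).
      pose proof (comm_final a0r a0i a1r a1i b0r b0i b1r b1i N1 ltac:(lra) ltac:(lra)) as E0; cbv zeta in E0; destruct E0 as [E0 F0].
      pose proof (comm_final a1r a1i a1r a1i b1r b1i b1r b1i N1 ltac:(lra) ltac:(lra)) as E1; cbv zeta in E1; destruct E1 as [E1 F1].
      pose proof (comm_final a2r a2i a1r a1i b2r b2i b1r b1i N1 ltac:(lra) ltac:(lra)) as E2; cbv zeta in E2; destruct E2 as [E2 F2].
      unfold cscale, mkpar, par0, par1, par2, Cmult; simpl.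
      repeat apply pair_eq; lra.
      }
      {
      exists ((a0r*b0r + a0i*b0i)/(b0r*b0r+b0i*b0i), (a0i*b0r - a0r*b0i)/(b0r*b0r+b0i*b0i)).
      pose proof (comm_final a0r a0i a0r a0i b0r b0i b0r b0i N0 ltac:(lra) ltac:(lra)) as E0; cbv zeta in E0; destruct E0 as [E0 F0].
      pose proof (comm_final a1r a1i a0r a0i b1r b1i b0r b0i N0 ltac:(lra) ltac:(lra)) as E1; cbv zeta in E1; destruct E1 as [E1 F1].
      pose proof (comm_final a2r a2i a0r a0i b2r b2i b0r b0i N0 ltac:(lra) ltac:(lra)) as E2; cbv zeta in E2; destruct E2 as [E2 F2].
      unfold cscale, mkpar, par0, par1, par2, Cmult; simpl.
      repeat apply pair_eq; lra.
      }
    + intros [[cr ci] ->] x y. rewrite lie_eq.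
      unfold WR, WI, cscale, mkpar, RF, IF, DR, DI, par0, par1, par2, Cmult; simpl.
      apply pair_eq; ring.
  - intros [cr ci] x y. rewrite !gckv_eq. unfold Cmod.
    rewrite pow2_sqrt by (apply Rplus_le_le_0_compat; apply pow2_ge_0).
    unfold gE, cscale, mkpar, RF, IF, par0, par1, par2, Cmult; simpl. field.
Qed.
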